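(* Let $M$ be a principally Goldie*-lifting right $R$-module with $\mathrm{Rad}(M)\ll M$. Then $M/\mathrm{Rad}(M)$ is principally semisimple.
   Context: $R$ is an associative ring with identity; modules are unital right $R$-modules; $\mathrm{Rad}(M)$ is the Jacobson radical of $M$. $K\ll M$ means $K$ is small in $M$. A module is principally semisimple if every cyclic submodule is a direct summand. For submodules $X,Y$ of $M$, $X\,\beta^*\,Y$ means $(X+Y)/X\ll M/X$ and $(X+Y)/Y\ll M/Y$. $M$ is principally Goldie*-lifting if for every cyclic submodule $X$ of $M$ there is a direct summand $D$ of $M$ with $X\,\beta^*\,D$. *)

(* Defs.v *)
From HB Require Import structures.
From mathcomp Require Import all_boot all_order all_algebra.
Set Implicit Arguments. Unset Strict Implicit. Unset Printing Implicit Defensive.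
Import GRing.Theory.
Local Open Scope ring_scope.

(* A unital right R-module is a (unital) left module over the converse ring
   R^c: the right action  m * r  is  (r : R^c) *: m. *)

Section ModuleTheory.
Context {R : nzRingType} {M : lmodType R^c}.

Definition rmul (m : M) (r : R) : M := (r : R^c) *: m.

Definition is_submod (X : M -> Prop) : Prop :=
  [/\ X 0, (forall x y, X x -> X y -> X (x + y))
    & (forall x (r : R), X x -> X (rmul x r))].

Definition subm_le (X Y : M -> Prop) : Prop := forall m, X m -> Y m.

Definition subm_add (X Y : M -> Prop) : M -> Prop :=
  fun m => exists x y, [/\ X x, Y y & m = x + y].

Definition cyclic_sub (x : M) : M -> Prop := fun m => exists r : R, m = rmul x r.

Definition subm_full (L : M -> Prop) : Prop := forall m, L m.

Definition maximal_sub (L : M -> Prop) : Prop :=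
  [/\ is_submod L, ~ subm_full L &
      forall N, is_submod N -> subm_le L N -> subm_le N L \/ subm_full N].

(* Jacobson radical: intersection of all maximal submodules (= M if none) *)
Definition Rad : M -> Prop := fun m => forall L, maximal_sub L -> L m.

Definition small (K : M -> Prop) : Prop :=
  forall L, is_submod L -> subm_full (subm_add K L) -> subm_full L.

Definition direct_summand (D : M -> Prop) : Prop :=
  is_submod D /\ exists D', [/\ is_submod D', subm_full (subm_add D D')
                              & forall m, D m -> D' m -> m = 0].

(* Notions in the factor module M/X, expressed through the correspondence
   theorem: submodules of M/X are exactly L/X with X <= L <= M.
   For X <= K:  K/X << M/X. *)
Definition small_quot (X K : M -> Prop) : Prop :=
  forall L, is_submod L -> subm_le X L ->
    subm_full (subm_add K L) -> subm_full L.

Definition beta_star (X Y : M -> Prop) : Prop :=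
  small_quot X (subm_add X Y) /\ small_quot Y (subm_add X Y).

Definition principally_Goldie_star_lifting : Prop :=
  forall x : M, exists D, direct_summand D /\ beta_star (cyclic_sub x) D.

(* For X <= K: K/X is a direct summand of M/X, i.e. there is L/X with
   K/X + L/X = M/X and K/X \cap L/X = 0 (i.e. K \cap L <= X). *)
Definition direct_summand_quot (X K : M -> Prop) : Prop :=
  exists L, [/\ is_submod L, subm_le X L, subm_full (subm_add K L)
              & forall m, K m -> L m -> X m].

(* M/X is principally semisimple: every cyclic submodule (x+X)R = (xR+X)/X
   of M/X is a direct summand of M/X. *)
Definition principally_semisimple_quot (X : M -> Prop) : Prop :=
  forall x : M, direct_summand_quot X (subm_add (cyclic_sub x) X).

End ModuleTheory.

(* Main.v *)
Require Import Defs.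
From HB Require Import structures.
From mathcomp Require Import all_boot all_order all_algebra.
From Stdlib Require Import Classical.
Set Implicit Arguments. Unset Strict Implicit.
Import GRing.Theory.
Local Open Scope ring_scope.

Section Aux.
Context {R : nzRingType} {M : lmodType R^c}.
Implicit Types X Y D E L N K : M -> Prop.

Lemma rmulD (x y : M) r : rmul (x + y) r = rmul x r + rmul y r.
Proof. by rewrite /rmul scalerDr. Qed.

Lemma sub_opp X x : is_submod X -> X x -> X (- x).
Proof. case=> _ _ hm hx. have := hm x (-1) hx. by rewrite /rmul scaleN1r. Qed.

Lemma sub_add X x y : is_submod X -> X x -> X y -> X (x + y).
Proof. by case=> _ ha _; apply: ha. Qed.

Lemma sub_sub X x y : is_submod X -> X x -> X y -> X (x - y).
Proof. move=> h hx hy; apply: sub_add => //; exact: sub_opp. Qed.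

Lemma sub0 X : is_submod X -> X 0.
Proof. by case. Qed.

Lemma add_submod X Y : is_submod X -> is_submod Y -> is_submod (subm_add X Y).
Proof.
move=> hX hY; split.
- exists 0, 0; split; [exact: sub0|exact: sub0|by rewrite addr0].
- move=> _ _ [x1 [y1 [h1 h2 ->]]] [x2 [y2 [h3 h4 ->]]].
  exists (x1 + x2), (y1 + y2); split; [exact: sub_add|exact: sub_add|by rewrite addrACA].
- move=> _ r [x [y [h1 h2 ->]]]; exists (rmul x r), (rmul y r); split.
  + by case: hX => _ _; apply.
  + by case: hY => _ _; apply.
  + exact: rmulD.
Qed.

Lemma cap_submod X Y : is_submod X -> is_submod Y -> is_submod (fun m => X m /\ Y m).
Proof.
move=> hX hY; split.
- by split; apply: sub0.
- by move=> x y [? ?] [? ?]; split; apply: sub_add.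
- by move=> x r [? ?]; split; [case: hX => _ _; apply|case: hY => _ _; apply].
Qed.

Lemma Rad_submod : is_submod (@Rad R M).
Proof.
split.
- by move=> L [hL _ _]; exact: sub0.
- by move=> x y hx hy L hL; apply: sub_add (hx L hL) (hy L hL); case: hL.
- by move=> x r hx L hL; have [[_ _ hm] _ _] := hL; exact: hm _ _ (hx L hL).
Qed.

Lemma cyc_submod (x : M) : is_submod (cyclic_sub x).
Proof.
split.
- by exists 0; rewrite /rmul scale0r.
- by move=> _ _ [r ->] [s ->]; exists (r + s); rewrite /rmul scalerDl.
- by move=> _ s [r ->]; exists (r * s); rewrite /rmul scalerA.
Qed.

Lemma add_le_l X Y : is_submod Y -> subm_le X (subm_add X Y).
Proof. by move=> hY m hm; exists m, 0; split => //; [exact: sub0|rewrite addr0]. Qed.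

Lemma add_le_r X Y : is_submod X -> subm_le Y (subm_add X Y).
Proof. by move=> hX m hm; exists 0, m; split => //; [exact: sub0|rewrite add0r]. Qed.

Definition compl D E :=
  [/\ is_submod D, is_submod E, subm_full (subm_add D E)
    & forall m, D m -> E m -> m = 0].

Lemma compl_sym D E : compl D E -> compl E D.
Proof.
case=> h1 h2 h3 h4; split => // m.
- by case: (h3 m) => [a [b [ha hb ->]]]; exists b, a; rewrite addrC.
- by move=> ? ?; apply: h4.
Qed.

Lemma compl_uniq D E a b a' b' : compl D E -> D a -> E b -> D a' -> E b' ->
  a + b = a' + b' -> a = a' /\ b = b'.
Proof.
case=> hD hE _ h0 ha hb ha' hb' e.
have e1 : a - a' = b' - b.
  by rewrite -[a](addrK b) e addrAC [a' + b']addrC addrK.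
have z : a - a' = 0 by apply: h0; [exact: sub_sub|rewrite e1; exact: sub_sub].
split; first by apply/eqP; rewrite -subr_eq0 z.
by apply/eqP; rewrite eq_sym -subr_eq0 -e1 z.
Qed.

Definition Pprop N := forall N2, is_submod N2 -> subm_le N N2 ->
  subm_le N2 N \/ subm_full N2.

Definition NN D E L := subm_add D (fun m => L m /\ E m).

Lemma NN_submod D E L : compl D E -> maximal_sub L -> is_submod (NN D E L).
Proof.
case=> hD hE _ _ [hL _ _]; apply: add_submod => //; exact: cap_submod.
Qed.

Lemma NN_P D E L : compl D E -> maximal_sub L -> Pprop (NN D E L).
Proof.
move=> hc hLm; have [hD hE hf h0] := hc; have [hL _ hmax] := hLm.
move=> N2 hN2 hle.
have hDN2 : subm_le D N2 by move=> m hm; apply: hle; apply: add_le_l => //;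
  apply: cap_submod.
have hsub' : is_submod (subm_add (fun m => N2 m /\ E m) L).
  by apply: add_submod => //; apply: cap_submod.
have hle2 : subm_le L (subm_add (fun m => N2 m /\ E m) L) := add_le_r (cap_submod hN2 hE).
case: (hmax _ hsub' hle2) => [hin|hfull].
- left => n hn; case: (hf n) => [a [b [ha hb en]]].
  exists a, b; split => //; split => //; apply: hin.
  exists b, 0; split => //; [split => //|exact: sub0|by rewrite addr0].
  have -> : b = n - a by rewrite en [a + b]addrC addrK.
  apply: sub_sub => //; exact: hDN2.
- right => y; case: (hf y) => [a [b [ha hb ->]]].
  apply: sub_add => //; first exact: hDN2.
  case: (hfull b) => [c [l [[hc2 hc3] hl eb]]].
  have hl2 : E l.
    have -> : l = b - c by rewrite eb [c + l]addrC addrK.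
    by apply: sub_sub.
  rewrite eb; apply: sub_add => //; apply: hle; exists 0, l; split => //.
  + exact: sub0.
  + by rewrite add0r.
Qed.

Lemma Rad_le_P N : is_submod N -> Pprop N -> subm_le (@Rad R M) N.
Proof.
move=> hN hP m hm; case: (classic (subm_full N)) => [hf|hnf]; first exact: hf.
apply: hm; split => // N2 h1 h2; exact: hP.
Qed.

Lemma small_P Y K N : is_submod K -> small_quot Y K -> is_submod N -> subm_le Y N ->
  Pprop N -> subm_le K N.
Proof.
move=> hK hs hN hY hP.
case: (hP _ (add_submod hK hN) (add_le_r hK)) => [h|h].
- by move=> m hm; apply: h; apply: add_le_l.
- by move=> m _; apply: (hs N hN hY h).
Qed.

Lemma lemC D E a c : compl D E -> D a -> E c -> Rad (a - c) -> Rad a.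
Proof.
move=> hc ha hcc hr L hL.
have hc' := compl_sym hc; have [hD hE _ _] := hc.
have hN := NN_submod hc' hL; have hP := NN_P hc' hL.
have := Rad_le_P hN hP hr.
have hlc : NN E D L c by apply: add_le_l => //; apply: cap_submod => //; case: hL.
move=> h1; have := sub_add hN h1 hlc; rewrite subrK.
case=> [e [l [he [hl hl2] ea]]].
have e0 : a + 0 = l + e by rewrite addr0 ea addrC.
by have [-> _] := compl_uniq hc ha (sub0 hE) hl2 he e0.
Qed.
End Aux.

Theorem proposition3p14 (R : nzRingType) (M : lmodType R^c) :
  @principally_Goldie_star_lifting R M ->
  small (@Rad R M) ->
  principally_semisimple_quot (@Rad R M).
Proof.
move=> hG _ x.
have [D [[hD [E [hE hf h0]]] [hs1 hs2]]] := hG x.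
have hc : compl D E by split.
have hX := cyc_submod x.
have step1 : forall y, cyclic_sub x y -> exists a b, [/\ D a, E b, Rad b & y = a + b].
  move=> y hy; case: (hf y) => [a [b [ha hb ey]]]; exists a, b; split => //.
  move=> L hL.
  have hN := NN_submod hc hL; have hP := NN_P hc hL.
  have hLs : is_submod L by case: hL.
  have hDN : subm_le D (NN D E L) by apply: add_le_l; apply: cap_submod.
  have := small_P (add_submod hX hD) hs2 hN hDN hP (add_le_l hD hy).
  case=> [a' [l [ha' [hl hl2] ey']]].
  have e0 : a + b = a' + l by rewrite -ey.
  by have [_ ->] := compl_uniq hc ha hb ha' hl2 e0.
have hfull : subm_full (subm_add (cyclic_sub x) E).
  apply: (hs1 _ (add_submod hX hE) (add_le_l hE)) => m.
  case: (hf m) => [a [b [ha hb ->]]]; exists a, b; split => //.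
  - exact: add_le_r.
  - exact: add_le_r.
exists (subm_add E Rad); split.
- exact: add_submod hE Rad_submod.
- exact: add_le_r.
- move=> m; case: (hfull m) => [y [e [hy he ->]]]; exists y, e; split => //.
  + exact: add_le_l Rad_submod _ _.
  + exact: add_le_l Rad_submod _ _.
- move=> _ [y [r [hy hr ->]]] [e [r' [he hr' em]]].
  have [a [b [ha hb hrb ey]]] := step1 y hy.
  rewrite ey in em *.
  have hra : Rad a.
    have hce : E (e - b) by exact: sub_sub.
    apply: (@lemC R M D E a (e - b) hc ha hce).
    rewrite (_ : a - (e - b) = a + b + r - e - r); last first.
      by rewrite addrAC addrK opprB addrA.
    rewrite em [e + r']addrC addrK; exact: sub_sub Rad_submod hr' hr.
  exact: sub_add Rad_submod (sub_add Rad_submod hra hrb) hr.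
Qed.
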